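(* Let $G$ be a cubic graph and let $M$ be a perfect matching cut of $G$. Let $C_1, C_2$ be two vertex-disjoint induced $4$-vertex cycles of $G$ such that there is an edge of $G$ between $V(C_1)$ and $V(C_2)$. Then $E(C_1) \cap M \neq \emptyset$ if and only if $E(C_2) \cap M \neq \emptyset$.
   Context: All graphs are finite, simple and undirected; a graph is cubic if every vertex has exactly three neighbours. A cutset of $G$ is a set $M \subseteq E(G)$ for which there is a bipartition $X \uplus Y = V(G)$ into two nonempty sets such that $M$ is exactly the set of edges with one endpoint in $X$ and one in $Y$. A perfect matching cut is a perfect matching (a set of edges covering every vertex exactly once) that is also a cutset. For a subgraph $C$, $E(C)$ and $V(C)$ denote its edge set and vertex set. *)

(* Defs.v *)
From mathcomp Require Import all_boot.
Set Implicit Arguments. Unset Strict Implicit. Unset Printing Implicit Defensive.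

Definition simple_graph (T : finType) (g : rel T) : Prop :=
  irreflexive g /\ symmetric g.

Definition edges (T : finType) (g : rel T) : {set {set T}} :=
  [set E : {set T} | [exists x, exists y, g x y && (E == [set x; y])]].

Definition cubic (T : finType) (g : rel T) : Prop :=
  forall v : T, #|[set w | g v w]| = 3.

Definition perfect_matching (T : finType) (g : rel T) (M : {set {set T}}) : Prop :=
  M \subset edges g /\ forall v : T, #|[set E in M | v \in E]| = 1.

Definition cutset (T : finType) (g : rel T) (M : {set {set T}}) : Prop :=
  exists X : {set T}, X != set0 /\ ~: X != set0 /\
    M = [set E in edges g | [exists x in X, exists y in ~: X, E == [set x; y]]].

Definition perfect_matching_cut (T : finType) (g : rel T) (M : {set {set T}}) :=
  perfect_matching g M /\ cutset g M.

Definition induced_C4 (T : finType) (g : rel T) (a b c d : T) : Prop :=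
  uniq [:: a; b; c; d] /\ g a b /\ g b c /\ g c d /\ g d a /\ ~~ g a c /\ ~~ g b d.

Definition C4_vertices (T : finType) (a b c d : T) : {set T} := [set a; b; c; d].

Definition C4_edges (T : finType) (a b c d : T) : {set {set T}} :=
  [set [set a; b]; [set b; c]; [set c; d]; [set d; a]].

(* Main.v *)
Require Import Defs.
From mathcomp Require Import all_boot.

Section S.
Variables (T : finType) (g : rel T) (X : {set T}) (M : {set {set T}}).
Hypothesis gI : irreflexive g.
Hypothesis gS : symmetric g.
Hypothesis HM : M = [set E in edges g | [exists x in X, exists y in ~: X, E == [set x; y]]].
Hypothesis Hpm : forall v : T, #|[set E in M | v \in E]| = 1.
Hypothesis Hcub : forall v : T, #|[set w | g v w]| = 3.

Lemma inM u v : g u v -> ([set u; v] \in M) = ((u \in X) != (v \in X)).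
Proof.
move=> guv; have nuv : u != v by apply: contraTneq guv => ->; rewrite gI.
rewrite HM inE.
have -> : [set u; v] \in edges g by rewrite inE; apply/existsP; exists u; apply/existsP; exists v; rewrite guv eqxx.
rewrite /=; apply/idP/idP.
- case/exists_inP=> x xX /exists_inP [y yX /eqP E].
  have xu : x \in [set u; v] by rewrite E !inE eqxx.
  have yu : y \in [set u; v] by rewrite E !inE eqxx orbT.
  rewrite !inE in xu yu yX.
  case/orP: xu => /eqP xe; case/orP: yu => /eqP ye; subst x y.
  + by rewrite xX in yX.
  + by rewrite xX (negbTE yX).
  + by rewrite xX (negbTE yX).
  + by rewrite xX in yX.
- case uX: (u \in X) => /= vX.
  + apply/exists_inP; exists u => //; apply/exists_inP; exists v; first by rewrite inE.
    by [].
  + apply/exists_inP; exists v; first by rewrite (negbNE vX).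
    apply/exists_inP; exists u; first by rewrite inE uX.
    by rewrite setUC.
Qed.

Lemma cross_ex v : exists w, g v w && ((v \in X) != (w \in X)).
Proof.
have /eqP/cards1P [E0 HE] := Hpm v.
have : E0 \in [set E in M | v \in E] by rewrite HE inE.
rewrite inE => /andP [EM vE].
have := EM; rewrite {1}HM inE => /andP [/[dup] Ee]; rewrite inE => /existsP [x /existsP [y /andP [gxy /eqP EE]]] _.
subst E0; rewrite !inE in vE; case/orP: vE => /eqP ->.
- by exists y; rewrite gxy -inM.
- have gyx : g y x by rewrite gS.
  by exists x; rewrite gyx -inM // setUC.
Qed.

Lemma cross_uniq v w1 w2 : g v w1 -> g v w2 -> (v \in X) != (w1 \in X) -> (v \in X) != (w2 \in X) -> w1 = w2.
Proof.
move=> g1 g2 c1 c2.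
have /eqP/cards1P [E0 HE] := Hpm v.
have h1 : [set v; w1] \in [set E in M | v \in E] by rewrite inE inM // c1 !inE eqxx.
have h2 : [set v; w2] \in [set E in M | v \in E] by rewrite inE inM // c2 !inE eqxx.
rewrite HE !inE in h1 h2.
have : w1 \in [set v; w2] by rewrite (eqP h2) -(eqP h1) !inE eqxx orbT.
rewrite !inE => /orP [/eqP e|/eqP //]; subst w1; by rewrite gI in g1.
Qed.

Definition all4 a b c d :=
  [&& (a \in X) == (b \in X), (b \in X) == (c \in X) & (c \in X) == (d \in X)].

Lemma L2 a b c d y : induced_C4 g a b c d -> g a y ->
  y != a -> y != b -> y != c -> y != d -> ((a \in X) != (y \in X)) = all4 a b c d.
Proof.
case=> U [gab [gbc [gcd [gda [nac nbd]]]]] gay ya yb yc yd.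
move: U; rewrite /= !inE !negb_or => /and4P [/and3P [nab nac' nad] /andP [nbc nbd'] ncd _].
have gad : g a d by rewrite gS.
have nb : forall w, g a w -> w \in [set b; d; y].
  move=> w gw.
  have S : [set b; d; y] \subset [set w | g a w].
    by apply/subsetP => z; rewrite !inE => /orP [/orP [] |] /eqP ->.
  have E3 : [set b; d; y] = y |: (d |: [set b]).
    by apply/setP=> z; rewrite !inE; case: (z == b); case: (z == d); case: (z == y).
  have C : #|[set b; d; y]| = #|[set w | g a w]|.
    rewrite Hcub E3 !cardsU1 cards1 !inE.
    by rewrite negb_or yd yb eq_sym nbd'.
  by rewrite ((subset_cardP C S) w) inE.
apply/idP/idP.
- move=> cy.
  have ub : forall w, g a w -> (a \in X) != (w \in X) -> w = y.
    by move=> w gw cw; apply: cross_uniq gw gay cw cy.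
  have sb : (a \in X) == (b \in X).
    by apply: contraT => cb; rewrite -(ub b gab cb) eqxx in yb.
  have sd : (a \in X) == (d \in X).
    by apply: contraT => cd; rewrite -(ub d gad cd) eqxx in yd.
  have sc : (a \in X) == (c \in X).
    apply: contraT => cc.
    have cb : (c \in X) != (b \in X) by rewrite -(eqP sb) eq_sym.
    have cd : (c \in X) != (d \in X) by rewrite -(eqP sd) eq_sym.
    have gcb : g c b by rewrite gS.
    by rewrite (@cross_uniq c b d gcb gcd cb cd) eqxx in nbd'.
  by rewrite /all4 -(eqP sb) -(eqP sc) -(eqP sd) !eqxx.
- move=> H; have [w /andP [gw cw]] := cross_ex a.
  move: (nb w gw); rewrite !inE => /orP [/orP [] |] /eqP e; subst w => //.
  + by move: H cw; rewrite /all4; case: (a \in X); case: (b \in X); case: (c \in X); case: (d \in X).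
  + by move: H cw; rewrite /all4; case: (a \in X); case: (b \in X); case: (c \in X); case: (d \in X).
Qed.

Lemma L1 a b c d : g a b -> g b c -> g c d -> g d a ->
  (C4_edges a b c d :&: M != set0) = ~~ all4 a b c d.
Proof.
move=> gab gbc gcd gda.
apply/set0Pn/idP.
- case=> E; rewrite /C4_edges !inE => /andP [/orP [/orP [/orP [] |] |] /eqP -> ]; rewrite inM //;
  by rewrite /all4; case: (a \in X); case: (b \in X); case: (c \in X); case: (d \in X).
- move=> H.
  have : [|| (a \in X) != (b \in X), (b \in X) != (c \in X), (c \in X) != (d \in X) | (d \in X) != (a \in X)].
    by move: H; rewrite /all4; case: (a \in X); case: (b \in X); case: (c \in X); case: (d \in X).
  case/or4P => h; [exists [set a; b] | exists [set b; c] | exists [set c; d] | exists [set d; a]];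
  rewrite /C4_edges inE; apply/andP; split; rewrite ?inM //; by rewrite !inE eqxx ?orbT.
Qed.

Lemma rotC4 a b c d : induced_C4 g a b c d -> induced_C4 g b c d a.
Proof.
case=> U [gab [gbc [gcd [gda [nac nbd]]]]].
split; first by rewrite (_ : [:: b; c; d; a] = rot 1 [:: a; b; c; d]) // rot_uniq.
by do 5 split => //; rewrite gS.
Qed.

Lemma all4_rot a b c d : all4 b c d a = all4 a b c d.
Proof. by rewrite /all4; case: (a \in X); case: (b \in X); case: (c \in X); case: (d \in X). Qed.

Lemma L2' a b c d x y : induced_C4 g a b c d -> x \in C4_vertices a b c d -> g x y ->
  y \notin C4_vertices a b c d -> ((x \in X) != (y \in X)) = all4 a b c d.
Proof.
move=> C xin gxy; rewrite /C4_vertices !inE !negb_or => /andP [/andP [/andP [ya yb] yc] yd].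
move: xin; rewrite /C4_vertices !inE => /orP [/orP [/orP [] |] |] /eqP e; subst x.
- by apply: L2.
- by rewrite -(all4_rot a); apply: L2 => //; apply: rotC4.
- by rewrite -(all4_rot a) -(all4_rot b); apply: L2 => //; do 2 apply: rotC4.
- by rewrite -(all4_rot a) -(all4_rot b) -(all4_rot c); apply: L2 => //; do 3 apply: rotC4.
Qed.

End S.

Theorem corollary4 (T : finType) (g : rel T) (M : {set {set T}})
    (a1 b1 c1 d1 a2 b2 c2 d2 : T) :
  simple_graph g -> cubic g -> perfect_matching_cut g M ->
  induced_C4 g a1 b1 c1 d1 -> induced_C4 g a2 b2 c2 d2 ->
  [disjoint C4_vertices a1 b1 c1 d1 & C4_vertices a2 b2 c2 d2] ->
  (exists x y, [/\ x \in C4_vertices a1 b1 c1 d1,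
                   y \in C4_vertices a2 b2 c2 d2 & g x y]) ->
  (C4_edges a1 b1 c1 d1 :&: M != set0) <-> (C4_edges a2 b2 c2 d2 :&: M != set0).
Proof.
move=> [gI gS] Hcub [[_ Hpm] [X [_ [_ HM]]]] C1 C2 Hdis [x [y [xin yin gxy]]].
have yn : y \notin C4_vertices a1 b1 c1 d1 by rewrite (disjointFl Hdis yin).
have xn : x \notin C4_vertices a2 b2 c2 d2 by rewrite (disjointFr Hdis xin).
have gyx : g y x by rewrite gS.
have E1 := @L2' T g X M gI gS HM Hpm Hcub _ _ _ _ _ _ C1 xin gxy yn.
have E2 := @L2' T g X M gI gS HM Hpm Hcub _ _ _ _ _ _ C2 yin gyx xn.
case: C1 => _ [g1 [g2 [g3 [g4 _]]]]; case: C2 => _ [h1 [h2 [h3 [h4 _]]]].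
rewrite (@L1 T g X M gI HM _ _ _ _ g1 g2 g3 g4) (@L1 T g X M gI HM _ _ _ _ h1 h2 h3 h4) -E1 -E2 eq_sym.
by [].
Qed.
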